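(* Let $d\ge 1$, $T>0$, $\alpha\ge 0$, and let $H:\mathbb{R}\to\mathbb{C}^{d\times d}$ be a continuously differentiable map such that $H(v)$ is Hermitian for every $v\in\mathbb{R}$ (so that $\partial_v H(v)$ is Hermitian as well). Let $u:[0,T]\to\mathbb{R}$ be a continuous control, and let $|\psi_i\rangle,|\psi_f\rangle\in\mathbb{C}^d$. Let $|\psi(t)\rangle$ and $|\chi(t)\rangle$ be the solutions on $[0,T]$ of $$ i\,\partial_t|\psi(t)\rangle = H(u(t))|\psi(t)\rangle,\quad |\psi(0)\rangle=|\psi_i\rangle, \qquad i\,\partial_t|\chi(t)\rangle = H(u(t))|\chi(t)\rangle,\quad |\chi(T)\rangle=|\psi_f\rangle .$$ Define the gradient of the figure of merit $\mathcal{J}[u]=\mathrm{Re}\,\langle\psi(T)|\psi_f\rangle-\frac{\alpha}{2}\int_0^T u(t)^2\,dt$ by $$\nabla\mathcal{J}[u](t) = -\alpha u(t) + \mathrm{Im}\,\langle\chi(t)|\partial_v H(u(t))|\psi(t)\rangle,\qquad t\in[0,T].$$ Let $N\in\mathbb{N}$, $0=t_0<t_1<\dots<t_N=T$, and for $n=0,\dots,N$ define the intermediate states $$|\varphi^u_n\rangle=\frac{T-t_n}{T}|\psi(t_n)\rangle+\frac{t_n}{T}|\chi(t_n)\rangle .$$ For $0\le n\le N-1$ set $\alpha_n=\frac{t_{n+1}-t_n}{T}\alpha$ and $\beta_n=\frac{T}{t_{n+1}-t_n}$, and let $|\psi_n(t)\rangle$, $|\chi_n(t)\rangle$ be the solutions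 on $[t_n,t_{n+1}]$ of $$ i\,\partial_t|\psi_n(t)\rangle = H(u(t))|\psi_n(t)\rangle,\ |\psi_n(t_n)\rangle=|\varphi^u_n\rangle,\qquad i\,\partial_t|\chi_n(t)\rangle = H(u(t))|\chi_n(t)\rangle,\ |\chi_n(t_{n+1})\rangle=|\varphi^u_{n+1}\rangle ,$$ and define the gradient of the sub-functional $\mathcal{J}_n[u_n,|\varphi^u\rangle]=-\frac12\big\||\psi_n(t_{n+1})\rangle-|\varphi^u_{n+1}\rangle\big\|^2-\frac{\alpha_n}{2}\int_{t_n}^{t_{n+1}}u_n(t)^2dt$ (with $u_n=u|_{[t_n,t_{n+1}]}$) by $$\nabla\mathcal{J}_n[u|_{[t_n,t_{n+1}]},|\varphi^u\rangle](t) = -\alpha_n u(t) + \mathrm{Im}\,\langle\chi_n(t)|\partial_v H(u(t))|\psi_n(t)\rangle,\qquad t\in[t_n,t_{n+1}].$$ Then for every $n\in\{0,\dots,N-1\}$ and every $t\in[t_n,t_{n+1}]$, $$\nabla\mathcal{J}[u](t)=\beta_n\,\nabla\mathcal{J}_n[u|_{[t_n,t_{n+1}]},|\varphi^u\rangle](t).$$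
   Context: Bra-ket notation: $\langle a|B|c\rangle$ denotes the Hermitian inner product of $|a\rangle$ with $B|c\rangle$ (antilinear in the first argument); $\|\cdot\|$ is the associated norm. $\partial_v H(v)$ denotes the derivative of $H$ with respect to its scalar argument $v$. All differential equations are linear ODEs in $\mathbb{C}^d$ with continuous coefficients, so their solutions exist and are unique on the stated intervals. *)

(* Defs.v *)
(* Complex numbers are
   modelled as pairs (real part, imaginary part); vectors of C^d as
   functions nat -> C (only indices < d matter); d x d matrices as
   nat -> nat -> C. *)
From Stdlib Require Import Reals Lra.
Open Scope R_scope.

Definition C := (R * R)%type.
Definition Cre (z : C) : R := fst z.
Definition Cim (z : C) : R := snd z.
Definition C0 : C := (0, 0).
Definition Cadd (z w : C) : C := (fst z + fst w, snd z + snd w).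
Definition Cmul (z w : C) : C :=
  (fst z * fst w - snd z * snd w, fst z * snd w + snd z * fst w).
Definition Cconj (z : C) : C := (fst z, - snd z).
Definition Rscal (r : R) (z : C) : C := (r * fst z, r * snd z).

Definition vec := nat -> C.
Definition mat := nat -> nat -> C.

Fixpoint Csum (n : nat) (f : nat -> C) : C :=
  match n with
  | O => C0
  | S m => Cadd (Csum m f) (f m)
  end.

Definition mv (d : nat) (A : mat) (x : vec) : vec :=
  fun i => Csum d (fun j => Cmul (A i j) (x j)).

Definition braket (d : nat) (a : vec) (B : mat) (c : vec) : C :=
  Csum d (fun i => Cmul (Cconj (a i)) (mv d B c i)).

Definition hermitian (d : nat) (A : mat) : Prop :=
  forall i j, (i < d)%nat -> (j < d)%nat -> A i j = Cconj (A j i).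

Definition cont_on (a b : R) (f : R -> R) : Prop :=
  forall t, a <= t <= b -> forall eps, 0 < eps ->
    exists delta, 0 < delta /\
      forall s, a <= s <= b -> Rabs (s - t) < delta -> Rabs (f s - f t) < eps.

(* y : [a,b] -> C^d is a solution of  i dy/dt = H(u(t)) y  on [a,b]:
   y is continuous on [a,b], differentiable on (a,b) and satisfies
   dy/dt = -i H(u(t)) y(t) there (componentwise, real and imaginary parts). *)
Definition is_solution (d : nat) (H : R -> mat) (u : R -> R) (a b : R)
    (y : R -> vec) : Prop :=
  (forall k, (k < d)%nat ->
     cont_on a b (fun s => Cre (y s k)) /\ cont_on a b (fun s => Cim (y s k))) /\
  (forall t, a < t < b -> forall k, (k < d)%nat ->
     derivable_pt_lim (fun s => Cre (y s k)) t (Cim (mv d (H (u t)) (y t) k)) /\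
     derivable_pt_lim (fun s => Cim (y s k)) t (- Cre (mv d (H (u t)) (y t) k))).

Definition C1_with_derivative (d : nat) (H dH : R -> mat) : Prop :=
  forall i j, (i < d)%nat -> (j < d)%nat ->
    (forall v, derivable_pt_lim (fun w => Cre (H w i j)) v (Cre (dH v i j)) /\
               derivable_pt_lim (fun w => Cim (H w i j)) v (Cim (dH v i j))) /\
    continuity (fun v => Cre (dH v i j)) /\ continuity (fun v => Cim (dH v i j)).

Definition gradJ (d : nat) (dH : R -> mat) (alpha : R) (u : R -> R)
    (psi chi : R -> vec) (t : R) : R :=
  - alpha * u t + Cim (braket d (chi t) (dH (u t)) (psi t)).

Definition phi_state (T : R) (tt : nat -> R) (psi chi : R -> vec) (n : nat) : vec :=
  fun k => Cadd (Rscal ((T - tt n) / T) (psi (tt n) k))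
                (Rscal (tt n / T) (chi (tt n) k)).

(* Main.v *)
Require Import Defs.
From Stdlib Require Import Reals Lra Lia FunctionalExtensionality.
Open Scope R_scope.

Fixpoint Rsum (n : nat) (f : nat -> R) : R :=
  match n with O => 0 | S m => Rsum m f + f m end.

Lemma Ceq (z w : Defs.C) : fst z = fst w -> snd z = snd w -> z = w.
Proof. destruct z, w; simpl; intros; subst; reflexivity. Qed.

Lemma Cim_Csum n f : Cim (Csum n f) = Rsum n (fun k => Cim (f k)).
Proof. induction n; simpl; [reflexivity|]. unfold Cim in *; simpl; rewrite IHn; reflexivity. Qed.
Lemma Cre_Csum n f : Cre (Csum n f) = Rsum n (fun k => Cre (f k)).
Proof. induction n; simpl; [reflexivity|]. unfold Cre in *; simpl; rewrite IHn; reflexivity. Qed.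

Lemma Rsum_ext n f g : (forall k, (k < n)%nat -> f k = g k) -> Rsum n f = Rsum n g.
Proof. induction n; intros H; simpl; auto. rewrite IHn by (intros; apply H; lia). rewrite H by lia; auto. Qed.
Lemma Csum_ext n f g : (forall k, (k < n)%nat -> f k = g k) -> Csum n f = Csum n g.
Proof. induction n; intros H; simpl; auto. rewrite IHn by (intros; apply H; lia). rewrite H by lia; auto. Qed.
Lemma Rsum_plus n f g : Rsum n (fun k => f k + g k) = Rsum n f + Rsum n g.
Proof. induction n; simpl; [ring|]. rewrite IHn; ring. Qed.
Lemma Rsum_scal n r f : Rsum n (fun k => r * f k) = r * Rsum n f.
Proof. induction n; simpl; [ring|]. rewrite IHn; ring. Qed.
Lemma Rsum_opp n f : Rsum n (fun k => - f k) = - Rsum n f.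
Proof. induction n; simpl; [ring|]. rewrite IHn; ring. Qed.
Lemma Rsum_zero n : Rsum n (fun _ => 0) = 0.
Proof. induction n; simpl; [ring|]. rewrite IHn; ring. Qed.
Lemma Rsum_swap n m f : Rsum n (fun i => Rsum m (fun j => f i j)) = Rsum m (fun j => Rsum n (fun i => f i j)).
Proof. induction n; simpl. - symmetry; apply Rsum_zero. - rewrite IHn, <- Rsum_plus; reflexivity. Qed.
Lemma Rsum_nonneg_zero n f : (forall k, (k<n)%nat -> 0 <= f k) -> Rsum n f = 0 -> forall k, (k<n)%nat -> f k = 0.
Proof.
  induction n; intros Hp Hs k Hk; [lia|]. simpl in Hs.
  assert (0 <= Rsum n f).
  { clear -Hp. induction n; simpl; [lra|]. assert (0 <= f n) by (apply Hp; lia).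
    assert (0 <= Rsum n f) by (apply IHn; intros; apply Hp; lia). lra. }
  assert (0 <= f n) by (apply Hp; lia).
  destruct (Nat.eq_dec k n). subst; lra.
  apply IHn; [intros; apply Hp; lia| lra | lia].
Qed.

Lemma Csum_add n f g : Csum n (fun k => Cadd (f k) (g k)) = Cadd (Csum n f) (Csum n g).
Proof. induction n; simpl. apply Ceq; simpl; ring. rewrite IHn. apply Ceq; simpl; ring. Qed.
Lemma Csum_scal n r f : Csum n (fun k => Rscal r (f k)) = Rscal r (Csum n f).
Proof. induction n; simpl. apply Ceq; simpl; ring. rewrite IHn. apply Ceq; simpl; ring. Qed.
Lemma Cmul_Csum n a f : Cmul a (Csum n f) = Csum n (fun k => Cmul a (f k)).
Proof. induction n; simpl. apply Ceq; simpl; ring. rewrite <- IHn. apply Ceq; simpl; ring. Qed.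

Definition lc (r : R) (x : vec) (s : R) (y : vec) : vec :=
  fun k => Cadd (Rscal r (x k)) (Rscal s (y k)).

Lemma mv_lc d A r x s y k : mv d A (lc r x s y) k = Cadd (Rscal r (mv d A x k)) (Rscal s (mv d A y k)).
Proof.
  unfold mv. rewrite <- Csum_scal, <- Csum_scal, <- Csum_add. apply Csum_ext; intros.
  unfold lc; apply Ceq; simpl; ring.
Qed.

Definition Q d (x : vec) (A : mat) (y : vec) :=
  Rsum d (fun i => Rsum d (fun j => Cim (Cmul (Cconj (x i)) (Cmul (A i j) (y j))))).

Lemma braket_Q d x A y : Cim (braket d x A y) = Q d x A y.
Proof.
  unfold braket, Q, mv. rewrite Cim_Csum. apply Rsum_ext; intros.
  rewrite Cmul_Csum, Cim_Csum. reflexivity.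
Qed.

Lemma braket_Im d x A y : Cim (braket d x A y) =
  Rsum d (fun k => Cre (x k) * Cim (mv d A y k) - Cim (x k) * Cre (mv d A y k)).
Proof. unfold braket; rewrite Cim_Csum; apply Rsum_ext; intros; unfold Cre, Cim; simpl; ring. Qed.

Lemma Q_herm d x A y : hermitian d A -> Q d x A y = - Q d y A x.
Proof.
  intros HA. unfold Q. rewrite (Rsum_swap d d (fun i j => Cim (Cmul (Cconj (y i)) (Cmul (A i j) (x j))))).
  rewrite <- Rsum_opp. apply Rsum_ext; intros i Hi. rewrite <- Rsum_opp. apply Rsum_ext; intros j Hj.
  rewrite (HA j i) by auto. destruct (x i), (y j), (A i j); unfold Cim; simpl; ring.
Qed.

Lemma Q_self d x A : hermitian d A -> Q d x A x = 0.
Proof. intros HA. pose proof (Q_herm d x A x HA). lra. Qed.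

Lemma Q_lc d c x e y A a p b q :
  Q d (lc c x e y) A (lc a p b q) =
  c*a*Q d x A p + c*b*Q d x A q + e*a*Q d y A p + e*b*Q d y A q.
Proof.
  unfold Q. rewrite <- !Rsum_scal, <- !Rsum_plus. apply Rsum_ext; intros.
  rewrite <- !Rsum_scal, <- !Rsum_plus. apply Rsum_ext; intros.
  unfold lc. destruct (x k), (y k), (p k0), (q k0), (A k k0); unfold Cim; simpl; ring.
Qed.

Lemma cont_on_lim a b f : cont_on a b f <-> forall t, a <= t <= b -> limit1_in f (fun s => a <= s <= b) (f t) t.
Proof.
  unfold cont_on, limit1_in, limit_in; simpl; unfold R_dist; split.
  - intros Hc t Ht eps He. destruct (Hc t Ht eps He) as [dl [Hd Hs]]. exists dl; split; auto.
    intros x [Hx Hx']. apply Hs; auto.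
  - intros Hc t Ht eps He. destruct (Hc t Ht eps He) as [dl [Hd Hs]]. exists dl; split; auto.
Qed.

Lemma cont_on_plus a b f g : cont_on a b f -> cont_on a b g -> cont_on a b (fun x => f x + g x).
Proof. rewrite !cont_on_lim; intros; apply limit_plus; auto. Qed.
Lemma cont_on_mult a b f g : cont_on a b f -> cont_on a b g -> cont_on a b (fun x => f x * g x).
Proof. rewrite !cont_on_lim; intros; apply limit_mul; auto. Qed.
Lemma cont_on_const a b c : cont_on a b (fun _ => c).
Proof. intros t Ht eps He; exists 1; split; [lra|]; intros. replace (c - c) with 0 by ring; rewrite Rabs_R0; lra. Qed.
Lemma cont_on_lin a b r f s g : cont_on a b f -> cont_on a b g -> cont_on a b (fun x => r * f x + s * g x).
Proof. intros; apply cont_on_plus; apply cont_on_mult; auto; apply cont_on_const. Qed.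
Lemma cont_on_sub a b a' b' f : a <= a' -> b' <= b -> cont_on a b f -> cont_on a' b' f.
Proof. intros h1 h2 Hc t Ht eps He. destruct (Hc t ltac:(lra) eps He) as [dl [Hd Hs]]. exists dl; split; auto.
  intros; apply Hs; auto; lra. Qed.

Lemma dlin f g t l1 l2 r s : derivable_pt_lim f t l1 -> derivable_pt_lim g t l2 ->
  derivable_pt_lim (fun x => r * f x + s * g x) t (r*l1 + s*l2).
Proof. intros. apply (derivable_pt_lim_plus (mult_real_fct r f) (mult_real_fct s g));
  apply derivable_pt_lim_scal; auto. Qed.

Lemma sol_lc d H u a b y z r s : is_solution d H u a b y -> is_solution d H u a b z ->
  is_solution d H u a b (fun t => lc r (y t) s (z t)).
Proof.
  intros [Cy Dy] [Cz Dz]. split.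
  - intros k Hk. destruct (Cy k Hk), (Cz k Hk). unfold lc, Cre, Cim; simpl.
    split; apply cont_on_lin; auto.
  - intros t Ht k Hk. destruct (Dy t Ht k Hk), (Dz t Ht k Hk). rewrite mv_lc.
    unfold lc, Cre, Cim in *; simpl. split.
    + apply dlin; auto.
    + replace (- (r * fst (mv d (H (u t)) (y t) k) + s * fst (mv d (H (u t)) (z t) k)))
        with (r * - fst (mv d (H (u t)) (y t) k) + s * - fst (mv d (H (u t)) (z t) k)) by ring.
      apply dlin; auto.
Qed.

Lemma sol_sub d H u a b a' b' y : a <= a' -> b' <= b -> is_solution d H u a b y -> is_solution d H u a' b' y.
Proof.
  intros h1 h2 [Cy Dy]. split.
  - intros k Hk; destruct (Cy k Hk); split; eapply cont_on_sub; eauto.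
  - intros t Ht; apply Dy; lra.
Qed.

Lemma deriv_Rsum n F L t : (forall k, (k<n)%nat -> derivable_pt_lim (F k) t (L k)) ->
  derivable_pt_lim (fun x => Rsum n (fun k => F k x)) t (Rsum n L).
Proof.
  induction n; intros HD; simpl.
  - apply derivable_pt_lim_const.
  - apply (derivable_pt_lim_plus (fun x => Rsum n (fun k => F k x)) (F n)).
    apply IHn; intros; apply HD; lia. apply HD; lia.
Qed.

Lemma cont_Rsum n F a b : (forall k, (k<n)%nat -> cont_on a b (F k)) -> cont_on a b (fun x => Rsum n (fun k => F k x)).
Proof.
  induction n; intros HC; simpl. apply cont_on_const.
  apply cont_on_plus. apply IHn; intros; apply HC; lia. apply HC; lia.
Qed.

Lemma const_on a b g : a < b -> cont_on a b g -> (forall t, a < t < b -> derivable_pt_lim g t 0) ->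
  forall s, a <= s <= b -> g s = g ((a+b)/2).
Proof.
  intros Hab Hc Hd.
  assert (Hint : forall x y, a < x -> x <= y -> y < b -> g x = g y).
  { intros x y Hx Hxy Hy. destruct (Req_dec x y) as [->|Hne]; auto.
    assert (pr : forall z, x < z < y -> derivable_pt g z).
    { intros z Hz. exists 0. apply Hd; lra. }
    assert (Hcc : forall z, x <= z <= y -> continuity_pt g z).
    { intros z Hz. apply derivable_continuous_pt. exists 0. apply Hd; lra. }
    assert (H0 : forall z (P : x < z < y), derive_pt g z (pr z P) = 0).
    { intros z P. apply derive_pt_eq_0. apply Hd; lra. }
    pose proof (null_derivative_loc g x y pr Hcc H0) as Hk.
    unfold constant_D_eq in Hk. symmetry; apply Hk; lra. }
  set (m := (a+b)/2).
  assert (Hm : a < m < b) by (unfold m; lra).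
  intros s Hs.
  destruct (Req_dec s a) as [->|Ha].
  { destruct (Req_dec (g a) (g m)) as [E|E]; auto. exfalso.
    assert (Hpos : 0 < Rabs (g a - g m)) by (apply Rabs_pos_lt; lra).
    destruct (Hc a ltac:(lra) _ Hpos) as [dl [Hdl Hs']].
    set (x := Rmin (a + dl/2) m).
    assert (a < x <= m) by (unfold x; apply Rmin_case_strong; lra).
    assert (x <= a + dl/2) by (unfold x; apply Rmin_l).
    specialize (Hs' x ltac:(lra) ltac:(rewrite Rabs_right; lra)).
    rewrite (Hint x m) in Hs' by lra. rewrite Rabs_minus_sym in Hs'. lra. }
  destruct (Req_dec s b) as [->|Hb].
  { destruct (Req_dec (g b) (g m)) as [E|E]; auto. exfalso.
    assert (Hpos : 0 < Rabs (g b - g m)) by (apply Rabs_pos_lt; lra).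
    destruct (Hc b ltac:(lra) _ Hpos) as [dl [Hdl Hs']].
    set (x := Rmax (b - dl/2) m).
    assert (m <= x < b) by (unfold x; apply Rmax_case_strong; lra).
    assert (b - dl/2 <= x) by (unfold x; apply Rmax_l).
    specialize (Hs' x ltac:(lra) ltac:(rewrite Rabs_left1; lra)).
    rewrite <- (Hint m x) in Hs' by lra. rewrite Rabs_minus_sym in Hs'. lra. }
  destruct (Rle_dec s m). apply Hint; lra. symmetry; apply Hint; lra.
Qed.

Lemma dsq f g t l1 l2 : derivable_pt_lim f t l1 -> derivable_pt_lim g t l2 ->
  derivable_pt_lim (fun x => f x * f x + g x * g x) t (2 * (f t * l1 + g t * l2)).
Proof.
  intros H1 H2.
  pose proof (derivable_pt_lim_plus (f*f)%F (g*g)%F t _ _ (derivable_pt_lim_mult f f t l1 l1 H1 H1)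
      (derivable_pt_lim_mult g g t l2 l2 H2 H2)) as Hs.
  replace (2 * (f t * l1 + g t * l2)) with (l1 * f t + f t * l1 + (l2 * g t + g t * l2)) by ring.
  exact Hs.
Qed.

Lemma uniq d H u a b y z c : a < b -> (forall v, hermitian d (H v)) ->
  is_solution d H u a b y -> is_solution d H u a b z -> a <= c <= b ->
  (forall k, (k<d)%nat -> y c k = z c k) ->
  forall t, a <= t <= b -> forall k, (k<d)%nat -> y t k = z t k.
Proof.
  intros Hab Hh Sy Sz Hc Hyz.
  set (e := fun t => lc 1 (y t) (-1) (z t)).
  destruct (sol_lc d H u a b y z 1 (-1) Sy Sz) as [Ce De]. fold e in Ce, De.
  set (g := fun x => Rsum d (fun k => Cre (e x k) * Cre (e x k) + Cim (e x k) * Cim (e x k))).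
  assert (Cg : cont_on a b g).
  { apply cont_Rsum; intros k Hk; destruct (Ce k Hk).
    apply cont_on_plus; apply cont_on_mult; auto. }
  assert (Dg : forall t, a < t < b -> derivable_pt_lim g t 0).
  { intros t Ht.
    replace 0 with (Rsum d (fun k => 2 * (Cre (e t k) * Cim (mv d (H (u t)) (e t) k)
         + Cim (e t k) * - Cre (mv d (H (u t)) (e t) k)))).
    - apply (deriv_Rsum d (fun k x => Cre (e x k) * Cre (e x k) + Cim (e x k) * Cim (e x k))).
      intros k Hk. destruct (De t Ht k Hk). apply dsq; auto.
    - rewrite (Rsum_ext d _ (fun k => 2 * (Cre (e t k) * Cim (mv d (H (u t)) (e t) k)
         - Cim (e t k) * Cre (mv d (H (u t)) (e t) k)))) by (intros; ring).
      rewrite Rsum_scal, <- braket_Im, braket_Q, Q_self by auto. ring. }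
  assert (Hg0 : g c = 0).
  { unfold g. rewrite <- (Rsum_zero d). apply Rsum_ext; intros k Hk.
    unfold e, lc. rewrite Hyz by auto. destruct (z c k); unfold Cre, Cim, Cadd, Rscal; simpl; ring. }
  intros t Ht k Hk.
  assert (Hgt : g t = 0).
  { rewrite (const_on a b g Hab Cg Dg t Ht), <- (const_on a b g Hab Cg Dg c Hc). auto. }
  assert (Hterm := Rsum_nonneg_zero d (fun k => Cre (e t k) * Cre (e t k) + Cim (e t k) * Cim (e t k)) ltac:(intros; nra) Hgt k Hk). cbv beta in Hterm.
  pose proof (Rle_0_sqr (Cre (e t k))). pose proof (Rle_0_sqr (Cim (e t k))). unfold Rsqr in *.
  assert (E1 : Cre (e t k) = 0).
  { assert (Cre (e t k) * Cre (e t k) = 0) by lra. destruct (Rmult_integral _ _ H2); auto. }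
  assert (E2 : Cim (e t k) = 0).
  { assert (Cim (e t k) * Cim (e t k) = 0) by lra. destruct (Rmult_integral _ _ H2); auto. }
  unfold e, lc, Cre, Cim in E1, E2. simpl in E1, E2.
  apply Ceq; lra.
Qed.

Lemma dH_herm d H dH : C1_with_derivative d H dH -> (forall v, hermitian d (H v)) ->
  forall v, hermitian d (dH v).
Proof.
  intros HC Hh v i j Hi Hj.
  destruct (HC i j Hi Hj) as [Da _]. destruct (Da v) as [D1 D2].
  destruct (HC j i Hj Hi) as [Db _]. destruct (Db v) as [D3 D4].
  assert (E1 : (fun w => Cre (H w i j)) = (fun w => Cre (H w j i))).
  { apply functional_extensionality; intro w. rewrite (Hh w i j Hi Hj). reflexivity. }
  assert (E2 : (fun w => Cim (H w i j)) = (- (fun w => Cim (H w j i)))%F).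
  { apply functional_extensionality; intro w. rewrite (Hh w i j Hi Hj). reflexivity. }
  rewrite E1 in D1. rewrite E2 in D2.
  pose proof (uniqueness_limite _ _ _ _ D1 D3).
  pose proof (uniqueness_limite _ _ _ _ D2 (derivable_pt_lim_opp _ _ _ D4)).
  apply Ceq; unfold Cre, Cim in *; simpl; lra.
Qed.

Lemma Q_ext d x x' A y y' : (forall k, (k<d)%nat -> x k = x' k) -> (forall k, (k<d)%nat -> y k = y' k) ->
  Q d x A y = Q d x' A y'.
Proof. intros Hx Hy. unfold Q. apply Rsum_ext; intros i Hi. apply Rsum_ext; intros j Hj.
  rewrite Hx, Hy by auto. reflexivity. Qed.

Theorem theorem2
  (d : nat) (T alpha : R) (H dH : R -> mat) (u : R -> R)
  (psi_i psi_f : vec) (psi chi : R -> vec)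
  (N : nat) (tt : nat -> R) (psin chin : nat -> R -> vec) :
  (1 <= d)%nat -> 0 < T -> 0 <= alpha ->
  C1_with_derivative d H dH ->
  (forall v, hermitian d (H v)) ->
  cont_on 0 T u ->
  is_solution d H u 0 T psi -> (forall k, (k < d)%nat -> psi 0 k = psi_i k) ->
  is_solution d H u 0 T chi -> (forall k, (k < d)%nat -> chi T k = psi_f k) ->
  tt 0%nat = 0 -> tt N = T -> (forall n, (n < N)%nat -> tt n < tt (S n)) ->
  (forall n, (n < N)%nat ->
     is_solution d H u (tt n) (tt (S n)) (psin n) /\
     (forall k, (k < d)%nat -> psin n (tt n) k = phi_state T tt psi chi n k) /\
     is_solution d H u (tt n) (tt (S n)) (chin n) /\
     (forall k, (k < d)%nat -> chin n (tt (S n)) k = phi_state T tt psi chi (S n) k)) ->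
  forall n, (n < N)%nat ->
  forall t, tt n <= t <= tt (S n) ->
    let alpha_n := (tt (S n) - tt n) / T * alpha in
    let beta_n := T / (tt (S n) - tt n) in
    gradJ d dH alpha u psi chi t =
      beta_n * gradJ d dH alpha_n u (psin n) (chin n) t.
Proof.
  intros Hd HT Ha HC Hh Hu Spsi _ Schi _ H0 HN Hinc Hsub n Hn t Ht alpha_n beta_n.
  assert (mono : forall j, (j <= N)%nat -> forall i, (i <= j)%nat -> tt i <= tt j).
  { induction j; intros Hj i Hi.
    - replace i with 0%nat by lia; lra.
    - destruct (Nat.eq_dec i (S j)) as [->|]; [lra|].
      assert (tt i <= tt j) by (apply IHj; lia). assert (tt j < tt (S j)) by (apply Hinc; lia). lra. }
  set (a := tt n) in *. set (b := tt (S n)) in *.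
  assert (Hab : a < b) by (apply Hinc; auto).
  assert (Ha0 : 0 <= a) by (rewrite <- H0; apply mono; lia).
  assert (HbT : b <= T) by (rewrite <- HN; apply (mono N (le_n N)); lia).
  destruct (Hsub n Hn) as [Sp [Ip [Sc Ic]]].
  assert (Sw : forall r s, is_solution d H u a b (fun x => lc r (psi x) s (chi x))).
  { intros r s. apply (sol_sub d H u 0 T); try lra. apply sol_lc; auto. }
  assert (Ep : forall k, (k<d)%nat -> psin n t k = lc ((T-a)/T) (psi t) (a/T) (chi t) k).
  { intros k Hk. apply (uniq d H u a b (psin n) (fun x => lc ((T-a)/T) (psi x) (a/T) (chi x)) a); auto; try lra. }
  assert (Ec : forall k, (k<d)%nat -> chin n t k = lc ((T-b)/T) (psi t) (b/T) (chi t) k).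
  { intros k Hk. apply (uniq d H u a b (chin n) (fun x => lc ((T-b)/T) (psi x) (b/T) (chi x)) b); auto; try lra. }
  pose proof (dH_herm d H dH HC Hh (u t)) as HdH.
  unfold gradJ. rewrite !braket_Q.
  rewrite (Q_ext d (chin n t) _ _ (psin n t) _ Ec Ep), Q_lc.
  rewrite (Q_self d (psi t)), (Q_self d (chi t)), (Q_herm d (psi t) _ (chi t)) by auto.
  unfold alpha_n, beta_n. field. lra.
Qed.
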